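(* Let $\mathcal{D}=(\mathcal{V},\mathcal{E})$ be a simple digraph with $\mathcal{V}=\{1,\ldots,n\}$, $n\ge 2$, and let $L$ be its Laplacian matrix with rows $L_1,\dots,L_n$. Then $$r_{\max}(\mathcal{D})=\min_{b^1,b^2}\ \max\Big(\max_{i} L_i b^1,\ \max_j L_j b^2\Big)$$ subject to $b^1+b^2\le \mathbf 1$ (componentwise), $1\le \mathbf 1^T b^1\le n-1$, $1\le \mathbf 1^T b^2\le n-1$, and $b^1,b^2\in\{0,1\}^n$, where $i,j$ range over $\{1,\ldots,n\}$.
   Context: A simple digraph has no self-loops and at most one directed edge $(i,j)$ from $i$ to $j$. For $j\in\mathcal{V}$, $\mathcal{N}_j=\{i\in\mathcal{V}:(i,j)\in\mathcal{E}\}$ is the set of in-neighbors of $j$. The Laplacian $L\in\mathbb{R}^{n\times n}$ has entries $L_{j,j}=|\mathcal{N}_j|$, $L_{j,i}=-1$ if $i\neq j$ and $i\in\mathcal{N}_j$, and $L_{j,i}=0$ if $i\ne j$ and $i\notin\mathcal{N}_j$. For $r\in\mathbb{Z}_{\ge 0}$, a nonempty subset $S\subseteq\mathcal{V}$ is $r$-reachable if there exists $i\in S$ with $|\mathcal{N}_i\setminus S|\ge r$. A digraph on $n\ge 2$ nodes is $r$-robust if for every pair of nonempty, disjoint subsets of $\mathcal{V}$, at least one of them is $r$-reachable. $r_{\max}(\mathcal{D})$ denotes the largest integer $r\ge 0$ for which $\mathcal{D}$ is $r$-robust. $\mathbf 1$ is the all-ones vector of length $n$. *)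

(* Defs.v *)
From HB Require Import structures.
From mathcomp Require Import all_boot all_order all_algebra.
Set Implicit Arguments. Unset Strict Implicit. Unset Printing Implicit Defensive.
Import Order.TTheory GRing.Theory Num.Theory.
Local Open Scope ring_scope.

(* A simple digraph on vertex set 'I_n is an edge relation e : rel 'I_n
   ((i,j) is an edge iff e i j) with no self-loops; "at most one edge from
   i to j" is automatic for a relation. *)
Definition simple_digraph n (e : rel 'I_n) : Prop := forall i, ~~ e i i.

Definition innb n (e : rel 'I_n) (j : 'I_n) : {set 'I_n} := [set i | e i j].

Definition laplacian n (e : rel 'I_n) : 'M[int]_n :=
  \matrix_(j, i) (if i == j then (#|innb e j|%:Z)%R
                  else if i \in innb e j then (-1)%R else 0%R).

(* S is r-reachable: exists i in S with |N_i \ S| >= r (S nonempty is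
   required separately where used). *)
Definition r_reachable n (e : rel 'I_n) (S : {set 'I_n}) (r : nat) : bool :=
  [exists i in S, (r <= #|innb e i :\: S|)%N].

Definition r_robust n (e : rel 'I_n) (r : nat) : bool :=
  [forall S1 : {set 'I_n}, forall S2 : {set 'I_n},
     ((S1 != set0) && (S2 != set0) && [disjoint S1 & S2]) ==>
     (r_reachable e S1 r || r_reachable e S2 r)].

(* Since
   |N_i \ S| <= n - 1, no digraph on n >= 2 nodes is n-robust, so the
   largest such r lies below n.+1 (and 0-robustness always holds). *)
Definition r_max n (e : rel 'I_n) : nat :=
  (\max_(r < n.+1 | r_robust e r) r)%N.

Definition vmax n (F : 'I_n -> int) : int :=
  match [pick i : 'I_n] with
  | Some i0 => \big[Num.max/F i0]_(i < n) F i
  | None => 0%R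
  end.

Definition binvec n (b : 'cV[int]_n) : Prop :=
  forall i, b i ord0 = 0%R \/ b i ord0 = 1%R.

Definition feasible n (b1 b2 : 'cV[int]_n) : Prop :=
  [/\ binvec b1, binvec b2,
      (forall i, b1 i ord0 + b2 i ord0 <= 1)%R,
      (1 <= \sum_i b1 i ord0 <= n%:Z - 1)%R &
      (1 <= \sum_i b2 i ord0 <= n%:Z - 1)%R].

Definition objective n (e : rel 'I_n) (b1 b2 : 'cV[int]_n) : int :=
  Num.max (vmax (fun i => (laplacian e *m b1) i ord0))
          (vmax (fun j => (laplacian e *m b2) j ord0)).

(* Main.v *)
Require Import Defs.
From HB Require Import structures.
From mathcomp Require Import all_boot all_order all_algebra.
Import Order.TTheory GRing.Theory Num.Theory.
Set Implicit Arguments. Unset Strict Implicit. Unset Printing Implicit Defensive.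
Local Open Scope ring_scope.

Lemma bigmax_seq (T : eqType) (s : seq T) (F : T -> int) (a : int) :
  (forall j, j \in s -> F j <= \big[Num.max/a]_(i <- s) F i) /\
  (\big[Num.max/a]_(i <- s) F i = a \/
     exists2 j, j \in s & \big[Num.max/a]_(i <- s) F i = F j).
Proof.
elim: s => [|x s [IH1 IH2]]; first by rewrite big_nil; split=> //; left.
rewrite big_cons; split.
  move=> j; rewrite inE => /orP[/eqP->|js]; rewrite le_max ?lexx //.
  by rewrite IH1 ?orbT.
case: (leP (F x) (\big[Num.max/a]_(i <- s) F i)) => H.
  case: IH2 => [->|[j js ->]]; [by left|right].
  by exists j; rewrite // inE js orbT.
by right; exists x; rewrite ?inE ?eqxx.
Qed.

Lemma vmax_ge n (F : 'I_n -> int) i : F i <= vmax F.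
Proof.
rewrite /vmax; case: pickP => [i0 _|/(_ i)//].
by case: (bigmax_seq (index_enum 'I_n) F (F i0)) => H _; apply: H; rewrite mem_index_enum.
Qed.

Lemma vmax_eq n (F : 'I_n -> int) : (0 < n)%N -> exists i, vmax F = F i.
Proof.
move=> n0; rewrite /vmax; case: pickP => [i0 _|H]; last first.
  by have := H (Ordinal n0).
case: (bigmax_seq (index_enum 'I_n) F (F i0)) => _ [->|[j _ ->]]; by eexists.
Qed.

Definition bvec n (S : {set 'I_n}) : 'cV[int]_n := \col_i (if i \in S then 1 else 0).

Lemma sum_bvec n (S : {set 'I_n}) : \sum_i bvec S i ord0 = #|S|%:R.
Proof.
rewrite (eq_bigr (fun i => if i \in S then 1 else 0)); last first.
  by move=> i _; rewrite mxE; case: (i \in S).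
by rewrite -big_mkcond /= sumr_const.
Qed.

Lemma lap_bvec n (e : rel 'I_n) (S : {set 'I_n}) i : simple_digraph e ->
  (laplacian e *m bvec S) i ord0 =
  (if i \in S then #|innb e i|%:R else 0) - #|innb e i :&: S|%:R.
Proof.
move=> sd; rewrite mxE (bigD1 i) //= !mxE eqxx.
have -> : \sum_(k < n | k != i) laplacian e i k * bvec S k ord0 =
   - \sum_(k < n | k != i) (if k \in innb e i :&: S then 1 else 0).
  rewrite -sumrN; apply: eq_bigr => k /negbTE kni; rewrite !mxE kni /innb !inE.
  by case: (e k i); case: (k \in S); rewrite /= ?mulr1 ?mulr0 ?oppr0 ?mulN1r ?mul0r.
have -> : \sum_(k < n | k != i) (if k \in innb e i :&: S then 1 else 0) =
   \sum_(k in innb e i :&: S) (1 : int).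
  rewrite big_mkcond [RHS]big_mkcond /=; apply: eq_bigr => k _.
  have [->|kni2] := eqVneq k i; rewrite /= ?eqxx /= ?inE ?(negbTE (sd i)) //.
rewrite sumr_const; congr (_ - _).
by case: ifP => _; rewrite ?mulr1 ?mulr0 ?natz.
Qed.

Definition K n (e : rel 'I_n) (S : {set 'I_n}) : nat := (\max_(i in S) #|innb e i :\: S|)%N.

Lemma lap_in n (e : rel 'I_n) (S : {set 'I_n}) i : simple_digraph e -> i \in S ->
  (laplacian e *m bvec S) i ord0 = #|innb e i :\: S|%:Z.
Proof.
move=> sd iS; rewrite lap_bvec // iS -(cardsID S (innb e i)) natrD.
by rewrite addrAC subrr add0r natz.
Qed.

Lemma lap_out n (e : rel 'I_n) (S : {set 'I_n}) i : simple_digraph e -> i \notin S ->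
  (laplacian e *m bvec S) i ord0 <= 0.
Proof.
move=> sd iS; rewrite lap_bvec // (negbTE iS) sub0r oppr_le0 //.
Qed.

Lemma vmax_bvec n (e : rel 'I_n) (S : {set 'I_n}) : simple_digraph e -> S != set0 ->
  vmax (fun i => (laplacian e *m bvec S) i ord0) = (K e S)%:Z.
Proof.
move=> sd S0.
have cS : (0 < #|S|)%N by rewrite card_gt0.
have [i0 i0S Ki0] := eq_bigmax_cond (fun i => #|innb e i :\: S|) cS.
have n0 : (0 < n)%N by case: (i0) => m /=; case: n {e S S0 cS i0 i0S Ki0 sd}.
apply/eqP; rewrite eq_le; apply/andP; split; last first.
  by rewrite /K Ki0 -(lap_in sd i0S); apply: (vmax_ge (fun i => (laplacian e *m bvec S) i ord0)).
have [j ->] := vmax_eq (fun i => (laplacian e *m bvec S) i ord0) n0.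
case: (boolP (j \in S)) => jS.
  by rewrite lap_in // lez_nat; apply: leq_bigmax_cond.
by apply: le_trans (lap_out sd jS) _.
Qed.

Lemma reach_K n (e : rel 'I_n) (S : {set 'I_n}) r : S != set0 ->
  r_reachable e S r = (r <= K e S)%N.
Proof.
move=> S0; apply/idP/idP.
  case/existsP => i /andP[iS ri]; apply: leq_trans ri _.
  exact: (leq_bigmax_cond (P := fun i => i \in S)).
have cS : (0 < #|S|)%N by rewrite card_gt0.
have [i0 i0S Ki0] := eq_bigmax_cond (fun i => #|innb e i :\: S|) cS.
by rewrite /K Ki0 => h; apply/existsP; exists i0; rewrite i0S.
Qed.

Lemma binvec_bvec n (b : 'cV[int]_n) : binvec b -> b = bvec [set i | b i ord0 == 1].
Proof.
move=> hb; apply/matrixP => i j; rewrite (ord1 j) !mxE inE.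
by case: (hb i) => ->.
Qed.

Lemma obj_bvec n (e : rel 'I_n) (S1 S2 : {set 'I_n}) : simple_digraph e ->
  S1 != set0 -> S2 != set0 ->
  objective e (bvec S1) (bvec S2) = (maxn (K e S1) (K e S2))%:Z.
Proof.
move=> sd h1 h2; rewrite /objective !vmax_bvec //.
case: (leqP (K e S1) (K e S2)) => h.
  by apply/max_idPr; rewrite lez_nat.
by apply/max_idPl; rewrite lez_nat ltnW.
Qed.

From mathcomp Require Import zify.

Lemma sets_feas n (S1 S2 : {set 'I_n}) : S1 != set0 -> S2 != set0 ->
  [disjoint S1 & S2] -> feasible (bvec S1) (bvec S2).
Proof.
move=> h1 h2 hd.
have c1 : (0 < #|S1|)%N by rewrite card_gt0.
have c2 : (0 < #|S2|)%N by rewrite card_gt0.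
have cs : (#|S1| + #|S2| <= n)%N.
  have : (#|S2| <= #|~: S1|)%N.
    by apply: subset_leq_card; rewrite -disjoints_subset disjoint_sym.
  by have := cardsC S1; rewrite card_ord; lia.
split.
- by move=> i; rewrite mxE; case: ifP; [right|left].
- by move=> i; rewrite mxE; case: ifP; [right|left].
- move=> i; rewrite !mxE; case: ifP => i1; case: ifP => i2 //.
  move: hd; rewrite disjoints_subset => /subsetP/(_ i i1); by rewrite inE i2.
- by rewrite sum_bvec; apply/andP; split; lia.
- by rewrite sum_bvec; apply/andP; split; lia.
Qed.

Lemma feas_sets n (b1 b2 : 'cV[int]_n) : feasible b1 b2 ->
  exists S1 S2, [/\ b1 = bvec S1, b2 = bvec S2, S1 != set0, S2 != set0 &
                   [disjoint S1 & S2]].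
Proof.
case=> hb1 hb2 h12 s1 s2.
exists [set i | b1 i ord0 == 1], [set i | b2 i ord0 == 1].
have e1 := binvec_bvec hb1; have e2 := binvec_bvec hb2.
split => //.
- rewrite -card_gt0; move: s1; rewrite {1}e1 sum_bvec; move=> /andP[+ _]; lia.
- rewrite -card_gt0; move: s2; rewrite {1}e2 sum_bvec; move=> /andP[+ _]; lia.
rewrite disjoints_subset; apply/subsetP => i; rewrite !inE => /eqP i1.
apply/negP => /eqP i2; have := h12 i; by rewrite i1 i2.
Qed.

Lemma K_le n (e : rel 'I_n) S : (K e S < n.+1)%N.
Proof.
rewrite ltnS; apply/bigmax_leqP => i _.
by apply: leq_trans (max_card _) _; rewrite card_ord.
Qed.

Lemma rmax_le n (e : rel 'I_n) S1 S2 : S1 != set0 -> S2 != set0 ->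
  [disjoint S1 & S2] -> (r_max e <= maxn (K e S1) (K e S2))%N.
Proof.
move=> h1 h2 hd; apply/bigmax_leqP => r /forallP/(_ S1)/forallP/(_ S2).
rewrite h1 h2 hd /= !reach_K // => /orP[h|h]; rewrite leq_max h ?orbT //.
Qed.

Theorem theorem1 (n : nat) (e : rel 'I_n) :
  (2 <= n)%N -> simple_digraph e ->
  (exists b1 b2 : 'cV[int]_n,
      feasible b1 b2 /\ objective e b1 b2 = ((r_max e)%:Z)%R) /\
  (forall b1 b2 : 'cV[int]_n,
      feasible b1 b2 -> (((r_max e)%:Z) <= objective e b1 b2)%R).
Proof.
move=> n2 sd; split; last first.
  move=> b1 b2 /feas_sets [S1 [S2 [-> -> h1 h2 hd]]].
  by rewrite obj_bvec // lez_nat rmax_le.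
have l0 : (0 < n)%N by lia.
have l1 : (1 < n)%N by lia.
pose a := Ordinal l0; pose b := Ordinal l1.
pose P (p : {set 'I_n} * {set 'I_n}) :=
  (p.1 != set0) && (p.2 != set0) && [disjoint p.1 & p.2].
have P0 : P ([set a], [set b]).
  rewrite /P /= -!card_gt0 !cards1 /= disjoints_subset; apply/subsetP => x.
  by rewrite !inE => /eqP ->; apply/eqP => /(congr1 val).
case: (arg_minnP (fun p => maxn (K e p.1) (K e p.2)) P0) => [[S1 S2]].
rewrite /P /= => /andP[/andP[h1 h2] hd] hmin.
exists (bvec S1), (bvec S2); split; first exact: sets_feas.
rewrite obj_bvec //; congr Posz; apply/eqP; rewrite eqn_leq rmax_le // andbT.
have lt : (maxn (K e S1) (K e S2) < n.+1)%N by rewrite gtn_max !K_le.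
apply: (leq_trans _ (leq_bigmax_cond (Ordinal lt) _)) => //=.
apply/forallP => T1; apply/forallP => T2; apply/implyP => /andP[/andP[t1 t2] td].
rewrite !reach_K // -leq_max.
by apply: (hmin (T1, T2)); rewrite /P /= t1 t2 td.
Qed.
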